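(* Let $\mathfrak{g}_1,\mathfrak{g}_2$ be $S$-algebras such that $f_i(\mathfrak{g}_i)\subset C^1\mathfrak{g}_i$ for every $f_i\in\mathrm{Der}(\mathfrak{g}_i)$, $i=1,2$. Then $\mathfrak{g}_1\underline{\times}\mathfrak{g}_2$ is characteristically nilpotent and $D(\mathfrak{g}_1\underline{\times}\mathfrak{g}_2)\subset C^1(\mathfrak{g}_1\underline{\times}\mathfrak{g}_2)$ for every derivation $D$ of $\mathfrak{g}_1\underline{\times}\mathfrak{g}_2$.
   Context: All Lie algebras are finite-dimensional, complex, nilpotent and nonabelian. $C^1\mathfrak{g}=[\mathfrak{g},\mathfrak{g}]$. A nilpotent $\mathfrak{g}$ is characteristically nilpotent if $\mathfrak{g}^{[m]}=0$ for some $m$, where $\mathfrak{g}^{[1]}=\{f(Y): f\in\mathrm{Der}(\mathfrak{g}),Y\in\mathfrak{g}\}$ and $\mathfrak{g}^{[k]}=\mathrm{Der}(\mathfrak{g})(\mathfrak{g}^{[k-1]})$. Product by generators: for $\mathfrak{g}_1,\mathfrak{g}_2$ of dimensions $m_1,m_2$ take bases $\{X_1,\dots,X_{m_1}\}$, $\{X'_1,\dots,X'_{m_2}\}$ such that $X_1,\dots,X_{n_1}$ generate $\mathfrak{g}_1$ and $X_{n_1+1},\dots,X_{m_1}$ span $C^1\mathfrak{g}_1$, and similarly for $\mathfrak{g}_2$ with $n_2$ generators. $\mathfrak{g}_1\underline{\times}\mathfrak{g}_2$ is the Lie algebra on $\mathfrak{g}_1\oplus\mathfrak{g}_2\oplus\mathfrak{g}_3$,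 $\mathfrak{g}_3=\langle Z_1,\dots,Z_{n_1n_2}\rangle$, with the brackets of $\mathfrak{g}_1$ and of $\mathfrak{g}_2$, $[X_i,X'_j]=Z_{(i-1)n_2+j}$ for $i\le n_1$, $j\le n_2$, $[X_i,X'_j]=0$ otherwise, and $\mathfrak{g}_3$ central. For $D$ a derivation of $\mathfrak{g}_1\underline{\times}\mathfrak{g}_2$ write $D_{21}=p_2D|_{\mathfrak{g}_1}$ with $p_2$ the projection onto $\mathfrak{g}_2$. A nilpotent Lie algebra $\mathfrak{g}_1$ is an $S$-algebra if for every Lie algebra $\mathfrak{g}_2$ and every derivation $D$ of $\mathfrak{g}_1\underline{\times}\mathfrak{g}_2$ one has $D_{21}(\mathfrak{g}_1)\subset C^1\mathfrak{g}_2$. *)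

(* Defs.v *)
From HB Require Import structures.
From mathcomp Require Import all_boot all_order all_algebra.
From mathcomp Require Import all_reals complex.
Set Implicit Arguments. Unset Strict Implicit. Unset Printing Implicit Defensive.
Import GRing.Theory.
Local Open Scope ring_scope.

(* A Lie algebra of dimension m over F is modelled on row vectors 'rV[F]_m
   (coordinates w.r.t. a fixed basis e_0,...,e_{m-1} = delta_mx 0 j) with a
   bracket function.  Linear maps are matrices acting on the right: u |-> u *m D. *)
Section LieDefs.
Variable F : fieldType.

Definition is_lie (m : nat) (br : 'rV[F]_m -> 'rV[F]_m -> 'rV[F]_m) : Prop :=
  [/\ (forall (a : F) u u' v, br (a *: u + u') v = a *: br u v + br u' v),
      (forall (a : F) u v v', br u (a *: v + v') = a *: br u v + br u v'),
      (forall u, br u u = 0) &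
      (forall u v w, br u (br v w) + br v (br w u) + br w (br u v) = 0)].

Definition C1 (m : nat) (br : 'rV[F]_m -> 'rV[F]_m -> 'rV[F]_m) : 'M[F]_m :=
  (\sum_(i < m) \sum_(j < m) <<br (delta_mx 0 i) (delta_mx 0 j)>>)%MS.

Fixpoint lcs (m : nat) (br : 'rV[F]_m -> 'rV[F]_m -> 'rV[F]_m) (k : nat) : 'M[F]_m :=
  match k with
  | 0 => 1%:M
  | k'.+1 => (\sum_(i < m) \sum_(j < m) <<br (delta_mx 0 i) (row j (lcs br k'))>>)%MS
  end.

Definition nilpotent (m : nat) (br : 'rV[F]_m -> 'rV[F]_m -> 'rV[F]_m) : Prop :=
  exists k, (lcs br k == (0 : 'M[F]_m))%MS.

Definition nonabelian (m : nat) (br : 'rV[F]_m -> 'rV[F]_m -> 'rV[F]_m) : Prop :=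
  exists u v, br u v != 0.

Definition is_der (m : nat) (br : 'rV[F]_m -> 'rV[F]_m -> 'rV[F]_m) (D : 'M[F]_m) : Prop :=
  forall u v, br u v *m D = br (u *m D) v + br u (v *m D).

Fixpoint gder (m : nat) (br : 'rV[F]_m -> 'rV[F]_m -> 'rV[F]_m) (k : nat) : 'rV[F]_m -> Prop :=
  match k with
  | 0 => fun _ => True
  | k'.+1 => fun u => exists D Z, [/\ is_der br D, gder br k' Z & u = Z *m D]
  end.

Definition char_nilpotent (m : nat) (br : 'rV[F]_m -> 'rV[F]_m -> 'rV[F]_m) : Prop :=
  nilpotent br /\ exists k, forall u, gder br k u -> u = 0.

(* the basis is adapted with n generators: e_0..e_{n-1} generate and
   e_n..e_{m-1} span C^1 g *)
Definition adapted (m : nat) (br : 'rV[F]_m -> 'rV[F]_m -> 'rV[F]_m) (n : nat) : Prop :=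
  (n <= m)%N /\ (C1 br == ((\sum_(j < m | (n <= j)%N) <<(delta_mx 0 j : 'rV[F]_m)>>) : 'M[F]_m))%MS.

(* k-th coordinate (0 if out of range) *)
Definition coef (m : nat) (u : 'rV[F]_m) (k : nat) : F :=
  \sum_(p < m | val p == k) u 0 p.

(* the product by generators g1 x_ g2 on g1 (+) g2 (+) g3, dim g3 = n1*n2,
   with [X_i, X'_j] = Z_{i*n2+j} (0-based) for i < n1, j < n2. *)
Definition gen_prod (m1 m2 : nat) (br1 : 'rV[F]_m1 -> 'rV[F]_m1 -> 'rV[F]_m1)
  (br2 : 'rV[F]_m2 -> 'rV[F]_m2 -> 'rV[F]_m2) (n1 n2 : nat)
  (u v : 'rV[F]_(m1 + m2 + n1 * n2)) : 'rV[F]_(m1 + m2 + n1 * n2) :=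
  let u1 := lsubmx (lsubmx u) in let u2 := rsubmx (lsubmx u) in
  let v1 := lsubmx (lsubmx v) in let v2 := rsubmx (lsubmx v) in
  row_mx (row_mx (br1 u1 v1) (br2 u2 v2))
    (\row_(k < n1 * n2)
       (coef u1 (k %/ n2) * coef v2 (k %% n2) - coef v1 (k %/ n2) * coef u2 (k %% n2))).


Arguments gen_prod {m1 m2} br1 br2 n1 n2 u v.

Definition inj1 (m1 m2 n : nat) (u : 'rV[F]_m1) : 'rV[F]_(m1 + m2 + n) :=
  row_mx (row_mx u 0) 0.
Definition proj2 (m1 m2 n : nat) (w : 'rV[F]_(m1 + m2 + n)) : 'rV[F]_m2 :=
  rsubmx (lsubmx w).
Arguments inj1 {m1} m2 n u.
Arguments proj2 m1 {m2} n w.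

Definition S_algebra (m1 : nat) (br1 : 'rV[F]_m1 -> 'rV[F]_m1 -> 'rV[F]_m1) (n1 : nat) : Prop :=
  forall (m2 n2 : nat) (br2 : 'rV[F]_m2 -> 'rV[F]_m2 -> 'rV[F]_m2),
    is_lie br2 -> nilpotent br2 -> nonabelian br2 -> adapted br2 n2 ->
    forall D : 'M[F]_(m1 + m2 + n1 * n2), is_der (gen_prod br1 br2 n1 n2) D ->
    forall u : 'rV[F]_m1, (proj2 m1 (n1 * n2) (inj1 m2 (n1 * n2) u *m D) <= C1 br2)%MS.

End LieDefs.
Arguments gen_prod {F m1 m2} br1 br2 n1 n2 u v.
Arguments inj1 {F m1} m2 n u.
Arguments proj2 {F} m1 {m2} n w.

(* Main.v *)
Require Import Defs.
From HB Require Import structures.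
From mathcomp Require Import all_boot all_order all_algebra.
From mathcomp Require Import all_reals complex.
From mathcomp Require Import ring.
Set Implicit Arguments. Unset Strict Implicit. Unset Printing Implicit Defensive.
Import GRing.Theory.
Local Open Scope ring_scope.


Section Span.
Variable F : fieldType.

Definition span2 m (G : 'I_m -> 'I_m -> 'rV[F]_m) : 'M[F]_m :=
  (\sum_(i < m) \sum_(j < m) <<G i j>>)%MS.

Lemma span2_sup m (G : 'I_m -> 'I_m -> 'rV[F]_m) i j : (G i j <= span2 G)%MS.
Proof.
apply: (sumsmx_sup i) => //; apply: (sumsmx_sup j) => //; by rewrite genmxE.
Qed.

Definition subsp m (P : 'rV[F]_m -> Prop) :=
  P 0 /\ forall a u v, P u -> P v -> P (a *: u + v).

Lemma subsp_sum m (P : 'rV[F]_m -> Prop) I (r : seq I) (Q : pred I) (f : I -> 'rV_m) :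
  subsp P -> (forall i, Q i -> P (f i)) -> P (\sum_(i <- r | Q i) f i).
Proof.
move=> [P0 PC] Hf; elim/big_rec: _ => // i x Qi Px.
by rewrite -[f i]scale1r; apply: PC => //; apply: Hf.
Qed.

Lemma span2_ind m (G : 'I_m -> 'I_m -> 'rV[F]_m) (P : 'rV[F]_m -> Prop) :
  subsp P -> (forall i j, P (G i j)) -> forall u, (u <= span2 G)%MS -> P u.
Proof.
move=> sP HG u /sub_sumsmxP [u_ ->]; apply: subsp_sum => // i _.
have /sub_sums_genmxP [w_ Hw] := submxMl (u_ i) (\sum_(j < m) <<G i j>>)%MS.
rewrite Hw.
apply: subsp_sum => // j _.
rewrite [w_ j]mx11_scalar mul_scalar_mx.
case: sP => P0 PC; rewrite -[_ *: _]addr0; exact: PC.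
Qed.

Lemma sub_span2 m (G : 'I_m -> 'I_m -> 'rV[F]_m) (S : 'M[F]_m) :
  (forall i j, G i j <= S)%MS -> (span2 G <= S)%MS.
Proof.
move=> H; apply/sumsmx_subP => i _; apply/sumsmx_subP => j _; by rewrite genmxE.
Qed.

Lemma subsp_sub m n (S : 'M[F]_(n, m)) : subsp (fun u => u <= S)%MS.
Proof. split; first exact: sub0mx. by move=> a u v Hu Hv; rewrite addmx_sub ?scalemx_sub. Qed.

End Span.

Section Lie.
Variables (F : fieldType) (m : nat) (br : 'rV[F]_m -> 'rV[F]_m -> 'rV[F]_m).
Hypothesis Hl : is_lie br.

Local Notation e := (fun i : 'I_m => (delta_mx 0 i : 'rV[F]_m)).

Lemma br0l v : br 0 v = 0.
Proof. case: Hl => H _ _ _; have := H 1 0 0 v; rewrite !scale1r addr0 => E.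
by apply: (addrI (br 0 v)); rewrite -E addr0. Qed.
Lemma br0r v : br v 0 = 0.
Proof. case: Hl => _ H _ _; have := H 1 v 0 0; rewrite !scale1r addr0 => E.
by apply: (addrI (br v 0)); rewrite -E addr0. Qed.
Lemma brDl u u' v : br (u + u') v = br u v + br u' v.
Proof. case: Hl => H _ _ _; by have := H 1 u u' v; rewrite !scale1r. Qed.
Lemma brDr u v v' : br u (v + v') = br u v + br u v'.
Proof. case: Hl => _ H _ _; by have := H 1 u v v'; rewrite !scale1r. Qed.
Lemma brZl a u v : br (a *: u) v = a *: br u v.
Proof. case: Hl => H _ _ _; by have := H a u 0 v; rewrite addr0 br0l addr0. Qed.
Lemma brZr a u v : br u (a *: v) = a *: br u v.
Proof. case: Hl => _ H _ _; by have := H a u v 0; rewrite addr0 br0r addr0. Qed.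
Lemma brNl u v : br (- u) v = - br u v.
Proof. by rewrite -scaleN1r brZl scaleN1r. Qed.
Lemma brNr u v : br u (- v) = - br u v.
Proof. by rewrite -scaleN1r brZr scaleN1r. Qed.
Lemma brA u v : br u v = - br v u.
Proof.
case: Hl => _ _ H _; have := H (u + v); rewrite brDl !brDr !H add0r addr0.
by move/eqP; rewrite addr_eq0 => /eqP.
Qed.
Lemma br_suml I (r : seq I) (P : pred I) f v :
  br (\sum_(i <- r | P i) f i) v = \sum_(i <- r | P i) br (f i) v.
Proof. elim: r => [|x r IH]; rewrite ?big_nil ?br0l // !big_cons; by case: (P x); rewrite ?brDl IH. Qed.
Lemma br_sumr I (r : seq I) (P : pred I) f v :
  br v (\sum_(i <- r | P i) f i) = \sum_(i <- r | P i) br v (f i).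
Proof. elim: r => [|x r IH]; rewrite ?big_nil ?br0r // !big_cons; by case: (P x); rewrite ?brDr IH. Qed.

Lemma br_sub_gen p (vs : 'I_p -> 'rV[F]_m) (S : 'M[F]_m) (c : 'I_p -> F) x :
  (forall i j, br (e i) (vs j) <= S)%MS -> (br x (\sum_j c j *: vs j) <= S)%MS.
Proof.
move=> H; rewrite (row_sum_delta x) br_suml summx_sub // => i _.
rewrite brZl scalemx_sub // br_sumr summx_sub // => j _.
by rewrite brZr scalemx_sub.
Qed.

Lemma C1E : C1 br = span2 (fun i j => br (e i) (e j)).
Proof. by []. Qed.
Lemma lcsSE k : lcs br k.+1 = span2 (fun i j => br (e i) (row j (lcs br k))).
Proof. by []. Qed.

Lemma br_C1 x y : (br x y <= C1 br)%MS.
Proof.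
rewrite (row_sum_delta y); apply: br_sub_gen => i j.
by rewrite C1E (span2_sup (fun i j => br (e i) (e j))).
Qed.

Lemma br_lcs k x y : (y <= lcs br k)%MS -> (br x y <= lcs br k.+1)%MS.
Proof.
move/submxP => [c ->]; rewrite mulmx_sum_row; apply: br_sub_gen => i j.
by rewrite lcsSE (span2_sup (fun i j => br (e i) (row j (lcs br k)))).
Qed.

Lemma C1_lcs1 : (C1 br <= lcs br 1)%MS.
Proof. apply: sub_span2 => i j; apply: br_lcs; exact: submx1. Qed.

Lemma lcs_decr k : (lcs br k.+1 <= lcs br k)%MS.
Proof.
elim: k => [|k IH]; first exact: submx1.
rewrite lcsSE; apply: sub_span2 => i j; apply: br_lcs.
exact: submx_trans (row_sub _ _) IH.
Qed.

Lemma lcs_decrn k d : (lcs br (k + d) <= lcs br k)%MS.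
Proof.
elim: d => [|d IH]; first by rewrite addn0.
by rewrite addnS; apply: submx_trans (lcs_decr _) IH.
Qed.

Lemma subN p (S : 'M[F]_(p, m)) (u : 'rV[F]_m) : (u <= S)%MS -> (- u <= S)%MS.
Proof. by move=> H; rewrite -scaleN1r scalemx_sub. Qed.

Lemma brC i : forall j x y, (x <= lcs br i)%MS -> (y <= lcs br j)%MS ->
  (br x y <= lcs br (i + j).+1)%MS.
Proof.
elim: i => [|i IH] j x y Hx Hy; first exact: br_lcs.
move: x Hx; rewrite lcsSE; apply: (span2_ind (P := fun x => br x y <= lcs br (i.+1 + j).+1)%MS).
  split; first by rewrite br0l sub0mx.
  by move=> a u v Hu Hv; rewrite brDl brZl addmx_sub ?scalemx_sub.
move=> a b; set r := row b _.
have Hr : (r <= lcs br i)%MS by exact: row_sub.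
case: Hl => _ _ _ J.
have -> : br (br (e a) r) y = br (e a) (br r y) + br r (br y (e a)).
  by rewrite brA; apply/eqP; rewrite eq_sym -addr_eq0; apply/eqP; exact: J.
rewrite addmx_sub //.
  by apply: br_lcs; rewrite addSn; apply: IH.
have -> : (i.+1 + j).+1 = (i + j.+1).+1 by rewrite addSn addnS.
apply: IH => //; rewrite brA; apply: subN; exact: br_lcs.
Qed.

Lemma der_lcs (D : 'M[F]_m) : is_der br D -> (forall u : 'rV[F]_m, u *m D <= C1 br)%MS ->
  forall k (u : 'rV[F]_m), (u <= lcs br k)%MS -> (u *m D <= lcs br k.+1)%MS.
Proof.
move=> HD H1; elim=> [|k IH] u.
  by move=> _; apply: submx_trans (H1 u) C1_lcs1.
rewrite lcsSE; apply: (span2_ind (P := fun u => u *m D <= lcs br k.+2)%MS).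
  split; first by rewrite mul0mx sub0mx.
  by move=> a x y Hx Hy; rewrite mulmxDl -scalemxAl addmx_sub ?scalemx_sub.
move=> a b; rewrite HD addmx_sub //.
  have -> : k.+2 = (1 + k).+1 by [].
  apply: brC; first exact: submx_trans (H1 _) C1_lcs1.
  exact: row_sub.
apply: br_lcs; apply: IH; exact: row_sub.
Qed.

Lemma der_C1 (D : 'M[F]_m) : is_der br D -> forall u : 'rV[F]_m, (u <= C1 br)%MS -> (u *m D <= C1 br)%MS.
Proof.
move=> HD; rewrite C1E; apply: span2_ind.
  split; first by rewrite mul0mx sub0mx.
  by move=> a x y Hx Hy; rewrite mulmxDl -scalemxAl addmx_sub ?scalemx_sub.
by move=> i j; rewrite HD addmx_sub ?br_C1.
Qed.

Lemma gder_lcs : (forall D, is_der br D -> forall u : 'rV[F]_m, u *m D <= C1 br)%MS ->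
  forall k u, gder br k u -> (u <= lcs br k)%MS.
Proof.
move=> H; elim=> [|k IH] u /=; first by move=> _; exact: submx1.
move=> [D [Z [HD HZ ->]]]; apply: der_lcs => //; [exact: H | exact: IH].
Qed.

Lemma charnil_of : nilpotent br -> (forall D, is_der br D -> forall u : 'rV[F]_m, u *m D <= C1 br)%MS ->
  char_nilpotent br.
Proof.
move=> [k Hk] H; split; first by exists k.
exists k => u /(gder_lcs H) Hu; apply/eqP; rewrite -submx0.
by apply: submx_trans Hu _; case/andP: Hk.
Qed.

End Lie.


Section Parts.
Variable F : fieldType.
Definition p1 m1 m2 n (w : 'rV[F]_(m1 + m2 + n)) : 'rV[F]_m1 := lsubmx (lsubmx w).
Definition p3 m1 m2 n (w : 'rV[F]_(m1 + m2 + n)) : 'rV[F]_n := rsubmx w.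
Definition in2 m1 m2 n (x : 'rV[F]_m2) : 'rV[F]_(m1 + m2 + n) := row_mx (row_mx 0 x) 0.
Definition in3 m1 m2 n (x : 'rV[F]_n) : 'rV[F]_(m1 + m2 + n) := row_mx 0 x.
Variables m1 m2 n : nat.
Implicit Types (w : 'rV[F]_(m1 + m2 + n)).

Lemma eq_parts w w' : p1 w = p1 w' -> proj2 m1 n w = proj2 m1 n w' -> p3 w = p3 w' -> w = w'.
Proof.
rewrite /p1 /proj2 /p3 => h1 h2 h3.
rewrite -[w]hsubmxK -[w']hsubmxK h3; congr row_mx.
by rewrite -[lsubmx w]hsubmxK -[lsubmx w']hsubmxK h1 h2.
Qed.

Lemma p1L a w w' : p1 (a *: w + w') = a *: p1 w + p1 w'.
Proof. by rewrite /p1 !linearD !linearZ. Qed.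
Lemma p2L a w w' : proj2 m1 n (a *: w + w') = a *: proj2 m1 n w + proj2 m1 n w'.
Proof. by rewrite /proj2 !linearD !linearZ. Qed.
Lemma p3L a w w' : p3 (a *: w + w') = a *: p3 w + p3 w'.
Proof. by rewrite /p3 !linearD !linearZ. Qed.
Lemma p1D w w' : p1 (w + w') = p1 w + p1 w'.
Proof. by rewrite -[in LHS](scale1r w) p1L scale1r. Qed.
Lemma p2D w w' : proj2 m1 n (w + w') = proj2 m1 n w + proj2 m1 n w'.
Proof. by rewrite -[in LHS](scale1r w) p2L scale1r. Qed.
Lemma p3D w w' : p3 (w + w') = p3 w + p3 w'.
Proof. by rewrite -[in LHS](scale1r w) p3L scale1r. Qed.
Lemma p10 : p1 (0 : 'rV[F]_(m1 + m2 + n)) = 0. Proof. by rewrite /p1 !linear0. Qed.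
Lemma p20 : proj2 m1 n (0 : 'rV[F]_(m1 + m2 + n)) = 0. Proof. by rewrite /proj2 !linear0. Qed.
Lemma p30 : p3 (0 : 'rV[F]_(m1 + m2 + n)) = 0. Proof. by rewrite /p3 !linear0. Qed.

Lemma p1i1 (x : 'rV[F]_m1) : p1 (inj1 m2 n x) = x. Proof. by rewrite /p1 /inj1 !row_mxKl. Qed.
Lemma p2i1 (x : 'rV[F]_m1) : proj2 m1 n (inj1 m2 n x) = 0. Proof. by rewrite /proj2 /inj1 row_mxKl row_mxKr. Qed.
Lemma p3i1 (x : 'rV[F]_m1) : p3 (inj1 m2 n x) = 0. Proof. by rewrite /p3 /inj1 row_mxKr. Qed.
Lemma p1i2 (x : 'rV[F]_m2) : p1 (in2 m1 n x) = 0. Proof. by rewrite /p1 /in2 !row_mxKl. Qed.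
Lemma p2i2 (x : 'rV[F]_m2) : proj2 m1 n (in2 m1 n x) = x. Proof. by rewrite /proj2 /in2 row_mxKl row_mxKr. Qed.
Lemma p3i2 (x : 'rV[F]_m2) : p3 (in2 m1 n x) = 0. Proof. by rewrite /p3 /in2 row_mxKr. Qed.
Lemma p1i3 (x : 'rV[F]_n) : p1 (in3 m1 m2 x) = 0. Proof. by rewrite /p1 /in3 row_mxKl linear0. Qed.
Lemma p2i3 (x : 'rV[F]_n) : proj2 m1 n (in3 m1 m2 x) = 0. Proof. by rewrite /proj2 /in3 row_mxKl linear0. Qed.
Lemma p3i3 (x : 'rV[F]_n) : p3 (in3 m1 m2 x) = x. Proof. by rewrite /p3 /in3 row_mxKr. Qed.

Lemma decomp w : w = inj1 m2 n (p1 w) + in2 m1 n (proj2 m1 n w) + in3 m1 m2 (p3 w).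
Proof.
apply: eq_parts; rewrite ?p1D ?p2D ?p3D.
- by rewrite p1i1 p1i2 p1i3 !addr0.
- by rewrite p2i1 p2i2 p2i3 add0r addr0.
- by rewrite p3i1 p3i2 p3i3 !add0r.
Qed.

End Parts.

Section Coef.
Variable F : fieldType.
Lemma coefL m a (u v : 'rV[F]_m) k : coef (a *: u + v) k = a * coef u k + coef v k.
Proof. by rewrite /coef mulr_sumr -big_split /=; apply: eq_bigr => i _; rewrite !mxE. Qed.
Lemma coef0 m k : coef (0 : 'rV[F]_m) k = 0.
Proof. by rewrite /coef big1 // => i _; rewrite mxE. Qed.
Lemma coefD m (u v : 'rV[F]_m) k : coef (u + v) k = coef u k + coef v k.
Proof. by rewrite -[in LHS](scale1r u) coefL mul1r. Qed.
Lemma coefZ m a (u : 'rV[F]_m) k : coef (a *: u) k = a * coef u k.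
Proof. by rewrite -[a *: u]addr0 coefL coef0 addr0. Qed.
Lemma coef_delta m (i : 'I_m) k : coef (delta_mx 0 i : 'rV[F]_m) k = (val i == k)%:R.
Proof.
rewrite /coef; case: (ltnP k m) => hk.
  rewrite (bigD1 (Ordinal hk)) //= big1 ?addr0.
    by rewrite mxE eqxx /= eq_sym.
  by move=> j /andP [/eqP hj /eqP []]; apply: val_inj.
rewrite big1; last by move=> j /eqP hj; move: (ltn_ord j); rewrite hj ltnNge hk.
have : val i != k by apply/eqP => E; move: (ltn_ord i); rewrite E ltnNge hk.
by move/negbTE ->.
Qed.

Lemma coef_C1 m (br : 'rV[F]_m -> 'rV[F]_m -> 'rV[F]_m) n :
  is_lie br -> adapted br n -> forall x y a, (a < n)%N -> coef (br x y) a = 0.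
Proof.
move=> Hl [_ /andP [H _]] x y a ha.
have /sub_sums_genmxP [u_ E] := submx_trans (br_C1 Hl x y) H.
rewrite /coef big1 // => p /eqP hp; rewrite E summxE big1 // => j hj.
rewrite mxE big_ord1 mxE /=.
have -> : (p == j) = false by apply/negbTE/eqP => jp; move: hj; rewrite -jp hp leqNgt ha.
by rewrite mulr0.
Qed.
End Coef.


Lemma kbounds n1 n2 (k : 'I_(n1 * n2)) : (k %/ n2 < n1)%N /\ (k %% n2 < n2)%N.
Proof.
have n2p : (0 < n2)%N.
  have := ltn_ord k; move: (nat_of_ord k) => kk; case: (posnP n2) => [->|//]; by rewrite muln0.
by rewrite ltn_divLR // ltn_pmod // ltn_ord.
Qed.

Section Prod.
Variables (F : fieldType) (m1 m2 n1 n2 : nat).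
Variables (br1 : 'rV[F]_m1 -> 'rV[F]_m1 -> 'rV[F]_m1) (br2 : 'rV[F]_m2 -> 'rV[F]_m2 -> 'rV[F]_m2).
Hypotheses (Hl1 : is_lie br1) (Hl2 : is_lie br2) (Ha1 : adapted br1 n1) (Ha2 : adapted br2 n2).
Local Notation g := (gen_prod br1 br2 n1 n2).
Local Notation M := (m1 + m2 + n1 * n2)%N.
Local Notation P2 := (proj2 m1 (n1 * n2)).
Local Notation I1 := (inj1 m2 (n1 * n2)).
Local Notation I2 := (in2 m1 (n1 * n2)).
Local Notation I3 := (in3 m1 m2).

Lemma gp1 u v : p1 (g u v) = br1 (p1 u) (p1 v).
Proof. by rewrite /gen_prod /p1 /= !row_mxKl. Qed.
Lemma gp2 u v : P2 (g u v) = br2 (P2 u) (P2 v).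
Proof. by rewrite /gen_prod /proj2 /= row_mxKl row_mxKr. Qed.
Lemma gp3 u v : p3 (g u v) = \row_(k < n1 * n2)
  (coef (p1 u) (k %/ n2) * coef (P2 v) (k %% n2) - coef (p1 v) (k %/ n2) * coef (P2 u) (k %% n2)).
Proof. by rewrite /gen_prod /p3 /= row_mxKr. Qed.

Lemma is_lie_g : is_lie g.
Proof.
case: Hl1 => L1 R1 A1 J1; case: Hl2 => L2 R2 A2 J2.
split.
- move=> a u u' v; apply: eq_parts; rewrite ?p1L ?p2L ?p3L ?gp1 ?gp2 ?gp3 ?p1L ?p2L //.
  apply/rowP => k; rewrite !mxE !coefL; ring.
- move=> a u v v'; apply: eq_parts; rewrite ?p1L ?p2L ?p3L ?gp1 ?gp2 ?gp3 ?p1L ?p2L //.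
  apply/rowP => k; rewrite !mxE !coefL; ring.
- move=> u; apply: eq_parts; rewrite ?gp1 ?gp2 ?gp3 ?p10 ?p20 ?p30 //.
  by apply/rowP => k; rewrite !mxE subrr.
- move=> u v w; apply: eq_parts; rewrite ?p1D ?p2D ?p3D ?gp1 ?gp2 ?gp3 ?p10 ?p20 ?p30 //.
  apply/rowP => k; rewrite !mxE !gp1 !gp2; have [h1 h2] := kbounds k.
  by rewrite !(coef_C1 Hl1 Ha1 _ _ h1) !(coef_C1 Hl2 Ha2 _ _ h2) !mulr0 !mul0r !subrr !addr0.
Qed.

Lemma g_i1 x y : g (I1 x) (I1 y) = I1 (br1 x y).
Proof.
apply: eq_parts; rewrite ?gp1 ?gp2 ?gp3 ?p1i1 ?p2i1 ?p3i1 ?br0l //.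
by apply/rowP => k; rewrite !mxE !coef0 !mulr0 subrr.
Qed.

Lemma g_i2 x y : g (I2 x) (I2 y) = I2 (br2 x y).
Proof.
apply: eq_parts; rewrite ?gp1 ?gp2 ?gp3 ?p1i2 ?p2i2 ?p3i2 ?br0l //.
by apply/rowP => k; rewrite !mxE !coef0 !mul0r subrr.
Qed.

Lemma n1m1 : (n1 <= m1)%N. Proof. by case: Ha1. Qed.
Lemma n2m2 : (n2 <= m2)%N. Proof. by case: Ha2. Qed.

Lemma in3_delta (k : 'I_(n1 * n2)) : exists a b,
  I3 (delta_mx 0 k) = g (I1 (delta_mx 0 a)) (I2 (delta_mx 0 b)).
Proof.
have [h1 h2] := kbounds k.
have ha : (k %/ n2 < m1)%N by apply: leq_trans h1 n1m1.
have hb : (k %% n2 < m2)%N by apply: leq_trans h2 n2m2.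
exists (Ordinal ha), (Ordinal hb).
apply: eq_parts; rewrite ?gp1 ?gp2 ?gp3 ?p1i1 ?p2i1 ?p3i1 ?p1i2 ?p2i2 ?p3i2 ?p1i3 ?p2i3 ?p3i3.
- by rewrite (br0r Hl1).
- by rewrite (br0l Hl2).
apply/rowP => j; rewrite !mxE !coef0 mulr0 subr0 !coef_delta /= -natrM mulnb.
congr (_%:R); congr (nat_of_bool _); apply/idP/idP => [/eqP -> | /andP [/eqP E1 /eqP E2]]; first by rewrite !eqxx.
by apply/eqP; apply: val_inj => /=; rewrite (divn_eq j n2) (divn_eq k n2) E1 E2.
Qed.

Lemma I1L a (x y : 'rV[F]_m1) : I1 (a *: x + y) = a *: I1 x + I1 y.
Proof. by apply: eq_parts; rewrite ?p1L ?p2L ?p3L ?p1i1 ?p2i1 ?p3i1 ?scaler0 ?addr0. Qed.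
Lemma I2L a (x y : 'rV[F]_m2) : I2 (a *: x + y) = a *: I2 x + I2 y.
Proof. by apply: eq_parts; rewrite ?p1L ?p2L ?p3L ?p1i2 ?p2i2 ?p3i2 ?scaler0 ?addr0. Qed.
Lemma I3L a (x y : 'rV[F]_(n1 * n2)) : I3 (a *: x + y) = a *: I3 x + I3 y.
Proof. by apply: eq_parts; rewrite ?p1L ?p2L ?p3L ?p1i3 ?p2i3 ?p3i3 ?scaler0 ?addr0. Qed.
Lemma I10 : I1 (0 : 'rV[F]_m1) = 0.
Proof. by apply: eq_parts; rewrite ?p1i1 ?p2i1 ?p3i1 ?p10 ?p20 ?p30. Qed.
Lemma I20 : I2 (0 : 'rV[F]_m2) = 0.
Proof. by apply: eq_parts; rewrite ?p1i2 ?p2i2 ?p3i2 ?p10 ?p20 ?p30. Qed.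
Lemma I30 : I3 (0 : 'rV[F]_(n1 * n2)) = 0.
Proof. by apply: eq_parts; rewrite ?p1i3 ?p2i3 ?p3i3 ?p10 ?p20 ?p30. Qed.

Lemma C1g (w : 'rV[F]_M) : (p1 w <= C1 br1)%MS -> (P2 w <= C1 br2)%MS -> (w <= C1 g)%MS.
Proof.
move=> H1 H2; rewrite (decomp w) !addmx_sub //.
- move: (p1 w) H1; rewrite C1E; apply: span2_ind.
    split; first by rewrite I10 sub0mx.
    by move=> a u v Hu Hv; rewrite I1L addmx_sub ?scalemx_sub.
  by move=> i j; rewrite -g_i1; apply: br_C1; apply: is_lie_g.
- move: (P2 w) H2; rewrite C1E; apply: span2_ind.
    split; first by rewrite I20 sub0mx.
    by move=> a u v Hu Hv; rewrite I2L addmx_sub ?scalemx_sub.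
  by move=> i j; rewrite -g_i2; apply: br_C1; apply: is_lie_g.
rewrite (row_sum_delta (p3 w)).
elim/big_rec: _ => [|k x _ Hx]; first by rewrite I30 sub0mx.
rewrite I3L addmx_sub ?scalemx_sub //.
have [a [b ->]] := in3_delta k; apply: br_C1; apply: is_lie_g.
Qed.

Lemma lcs_g_parts k (w : 'rV[F]_M) : (w <= lcs g k)%MS ->
  (p1 w <= lcs br1 k)%MS /\ (P2 w <= lcs br2 k)%MS.
Proof.
elim: k w => [|k IH] w; first by move=> _; rewrite !submx1.
rewrite lcsSE; apply: (span2_ind (P := fun w => (p1 w <= lcs br1 k.+1)%MS /\ (P2 w <= lcs br2 k.+1)%MS)).
  split; first by rewrite p10 p20 !sub0mx.
  move=> a u v [Hu1 Hu2] [Hv1 Hv2]; rewrite p1L p2L.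
  by split; rewrite addmx_sub ?scalemx_sub.
move=> i j; rewrite gp1 gp2; have [H1 H2] := IH _ (row_sub j (lcs g k)).
by split; apply: br_lcs.
Qed.

Lemma nilpotent_g : nilpotent br1 -> nilpotent br2 -> nilpotent g.
Proof.
move=> [k1 /andP [Hk1 _]] [k2 /andP [Hk2 _]].
exists (k1 + k2).+1; rewrite sub0mx andbT.
rewrite lcsSE; apply: sub_span2 => i j.
have [H1 H2] := lcs_g_parts (row_sub j (lcs g (k1 + k2))).
set r := row j _ in H1 H2 *.
have E1 : p1 r = 0.
  apply/eqP; rewrite -submx0; apply: submx_trans H1 _.
  by apply: submx_trans (lcs_decrn Hl1 _ _) Hk1.
have E2 : P2 r = 0.
  apply/eqP; rewrite -submx0; apply: submx_trans H2 _.
  by rewrite addnC; apply: submx_trans (lcs_decrn Hl2 _ _) Hk2.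
have -> : g (delta_mx 0 i) r = 0.
  apply: eq_parts; rewrite ?gp1 ?gp2 ?gp3 ?E1 ?E2 ?br0r ?p10 ?p20 ?p30 //.
  by apply/rowP => k; rewrite !mxE !coef0 mulr0 mul0r subrr.
exact: sub0mx.
Qed.

End Prod.


Section Lin.
Variable F : fieldType.
Lemma lin1E m n (f : 'rV[F]_m -> 'rV[F]_n) :
  (forall a u v, f (a *: u + v) = a *: f u + f v) -> forall u, u *m lin1_mx f = f u.
Proof.
move=> fL u.
have f0 : f 0 = 0.
  have := fL 1 0 0; rewrite !scale1r addr0 => E.
  by apply: (addrI (f 0)); rewrite -E addr0.
have fs : forall (r : seq 'I_m) (c : 'I_m -> F),
    f (\sum_(i <- r) c i *: delta_mx 0 i) = \sum_(i <- r) c i *: f (delta_mx 0 i).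
  move=> r c; elim: r => [|i r IH]; first by rewrite !big_nil f0.
  by rewrite !big_cons fL IH.
rewrite [in RHS](row_sum_delta u) fs; apply/rowP => j.
rewrite !mxE summxE; apply: eq_bigr => i _; by rewrite !mxE.
Qed.
End Lin.

Lemma idx_lt n1 n2 a b : (a < n1)%N -> (b < n2)%N -> (a * n2 + b < n1 * n2)%N.
Proof.
move=> ha hb; apply: (@leq_trans (a.+1 * n2)).
  by rewrite mulSn addnC ltn_add2r.
by rewrite leq_mul2r ha orbT.
Qed.

Lemma sidx_lt n1 n2 (k : 'I_(n2 * n1)) : ((k %% n1) * n2 + k %/ n1 < n1 * n2)%N.
Proof. have [h1 h2] := kbounds k; exact: idx_lt. Qed.

Definition sidx n1 n2 (k : 'I_(n2 * n1)) : 'I_(n1 * n2) := Ordinal (sidx_lt k).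

Lemma sidx_div n1 n2 (k : 'I_(n2 * n1)) : (sidx k %/ n2 = k %% n1)%N.
Proof.
have [h1 h2] := kbounds k; have n2p : (0 < n2)%N by apply: leq_ltn_trans (leq0n _) h1.
by rewrite /= divnMDl // divn_small // addn0.
Qed.
Lemma sidx_mod n1 n2 (k : 'I_(n2 * n1)) : (sidx k %% n2 = k %/ n1)%N.
Proof.
have [h1 h2] := kbounds k.
by rewrite /= modnMDl modn_small.
Qed.
Lemma sidxK n1 n2 (k : 'I_(n2 * n1)) : sidx (sidx k) = k.
Proof.
apply: val_inj; rewrite /= -/(nat_of_ord (sidx k)) sidx_div sidx_mod.
by rewrite -divn_eq.
Qed.

Section Swap.
Variable F : fieldType.
Definition sw m1 m2 n1 n2 (w : 'rV[F]_(m1 + m2 + n1 * n2)) : 'rV[F]_(m2 + m1 + n2 * n1) :=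
  row_mx (row_mx (proj2 m1 (n1 * n2) w) (p1 w)) (\row_(k < n2 * n1) - (p3 w) 0 (sidx k)).
Variables (m1 m2 n1 n2 : nat).
Implicit Types (w : 'rV[F]_(m1 + m2 + n1 * n2)).
Lemma p1sw w : p1 (sw w) = proj2 m1 (n1 * n2) w.
Proof. by rewrite /p1 /sw !row_mxKl. Qed.
Lemma p2sw w : proj2 m2 (n2 * n1) (sw w) = p1 w.
Proof. by rewrite /proj2 /sw row_mxKl row_mxKr. Qed.
Lemma p3sw w : p3 (sw w) = \row_(k < n2 * n1) - (p3 w) 0 (sidx k).
Proof. by rewrite /p3 /sw row_mxKr. Qed.
Lemma swL a w w' : sw (a *: w + w') = a *: sw w + sw w'.
Proof.
apply: eq_parts; rewrite ?p1L ?p2L ?p3L ?p1sw ?p2sw ?p3sw ?p1L ?p2L //.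
by apply/rowP => k; rewrite !mxE; ring.
Qed.
Lemma swD w w' : sw (w + w') = sw w + sw w'.
Proof. by rewrite -[in LHS](scale1r w) swL scale1r. Qed.
Lemma sw_i1 (x : 'rV[F]_m1) : sw (inj1 m2 (n1 * n2) x) = in2 m2 (n2 * n1) x.
Proof.
apply: eq_parts; rewrite ?p1sw ?p2sw ?p3sw ?p1i1 ?p2i1 ?p3i1 ?p1i2 ?p2i2 ?p3i2 //.
by apply/rowP => k; rewrite !mxE oppr0.
Qed.

Variables (br1 : 'rV[F]_m1 -> 'rV[F]_m1 -> 'rV[F]_m1) (br2 : 'rV[F]_m2 -> 'rV[F]_m2 -> 'rV[F]_m2).
Lemma sw_g u v : sw (gen_prod br1 br2 n1 n2 u v) = gen_prod br2 br1 n2 n1 (sw u) (sw v).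
Proof.
apply: eq_parts; rewrite ?p1sw ?p2sw ?p3sw ?gp1 ?gp2 ?gp3 ?p1sw ?p2sw ?p3sw //.
apply/rowP => k; rewrite !mxE sidx_div sidx_mod; ring.
Qed.
End Swap.

Section SwapK.
Variable F : fieldType.
Lemma swK m1 m2 n1 n2 (w : 'rV[F]_(m1 + m2 + n1 * n2)) : sw (sw w) = w.
Proof.
apply: eq_parts; rewrite ?(p1sw, p2sw, p3sw) //.
by apply/rowP => k; rewrite !mxE opprK sidxK.
Qed.
End SwapK.


Section Main.
Variables (F : fieldType) (m1 n1 m2 n2 : nat).
Variables (br1 : 'rV[F]_m1 -> 'rV[F]_m1 -> 'rV[F]_m1) (br2 : 'rV[F]_m2 -> 'rV[F]_m2 -> 'rV[F]_m2).
Hypotheses (Hl1 : is_lie br1) (Hn1 : nilpotent br1) (Hna1 : nonabelian br1) (Ha1 : adapted br1 n1).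
Hypotheses (Hl2 : is_lie br2) (Hn2 : nilpotent br2) (Hna2 : nonabelian br2) (Ha2 : adapted br2 n2).
Hypotheses (SA1 : S_algebra br1 n1) (SA2 : S_algebra br2 n2).
Hypothesis (Hd1 : forall f : 'M[F]_m1, is_der br1 f -> forall u : 'rV[F]_m1, (u *m f <= C1 br1)%MS).
Hypothesis (Hd2 : forall f : 'M[F]_m2, is_der br2 f -> forall u : 'rV[F]_m2, (u *m f <= C1 br2)%MS).
Local Notation g := (gen_prod br1 br2 n1 n2).
Local Notation M := (m1 + m2 + n1 * n2)%N.
Local Notation P2 := (proj2 m1 (n1 * n2)).
Local Notation I1 := (inj1 m2 (n1 * n2)).
Local Notation I2 := (in2 m1 (n1 * n2)).
Local Notation I3 := (in3 m1 m2).

Lemma der_C1g (D : 'M[F]_M) : is_der g D -> forall u : 'rV[F]_M, (u *m D <= C1 g)%MS.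
Proof.
move=> HD u; rewrite (decomp u) !mulmxDl !addmx_sub //.
- apply: C1g => //; last exact: (SA1 Hl2 Hn2 Hna2 Ha2 HD).
  pose f := fun x : 'rV[F]_m1 => p1 (I1 x *m D).
  have fL : forall a x y, f (a *: x + y) = a *: f x + f y.
    by move=> a x y; rewrite /f I1L mulmxDl -scalemxAl p1L.
  rewrite -/(f _) -(lin1E fL); apply: Hd1 => x y; rewrite !(lin1E fL) /f.
  by rewrite -(g_i1 n1 n2 br1 Hl2) HD p1D !gp1 !p1i1.
- apply: C1g => //.
    pose D' := lin1_mx (@sw F m2 m1 n2 n1) *m D *m lin1_mx (@sw F m1 m2 n1 n2).
    have s1L : forall a (x y : 'rV[F]_M), sw (a *: x + y) = a *: sw x + sw y by move=> *; apply: swL.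
    have s2L : forall a (x y : 'rV[F]_(m2 + m1 + n2 * n1)), sw (a *: x + y) = a *: sw x + sw y
      by move=> *; apply: swL.
    have D'E : forall w, w *m D' = sw (sw w *m D).
      by move=> w; rewrite /D' !mulmxA (lin1E s2L) (lin1E s1L).
    have HD' : is_der (gen_prod br2 br1 n2 n1) D'.
      by move=> w w'; rewrite !D'E sw_g HD swD !sw_g !swK.
    have := SA2 Hl1 Hn1 Hna1 Ha1 HD' (P2 u).
    by rewrite D'E sw_i1 p2sw.
  pose f := fun x : 'rV[F]_m2 => P2 (I2 x *m D).
  have fL : forall a x y, f (a *: x + y) = a *: f x + f y.
    by move=> a x y; rewrite /f I2L mulmxDl -scalemxAl p2L.
  rewrite -/(f _) -(lin1E fL); apply: Hd2 => x y; rewrite !(lin1E fL) /f.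
  by rewrite -(g_i2 n1 n2 br2 Hl1) HD p2D !gp2 !p2i2.
- apply: der_C1 => //; first exact: is_lie_g.
  by apply: C1g => //; rewrite ?p1i3 ?p2i3 sub0mx.
Qed.

Lemma main_gen : char_nilpotent g /\
  (forall D : 'M[F]_M, is_der g D -> forall u : 'rV[F]_M, (u *m D <= C1 g)%MS).
Proof.
split; last exact: der_C1g.
apply: charnil_of; first exact: is_lie_g.
  exact: nilpotent_g.
exact: der_C1g.
Qed.

End Main.

Unset Implicit Arguments.

Theorem mainTheorem12 (R : realType) (m1 n1 m2 n2 : nat)
  (br1 : 'rV[R[i]]_m1 -> 'rV[R[i]]_m1 -> 'rV[R[i]]_m1)
  (br2 : 'rV[R[i]]_m2 -> 'rV[R[i]]_m2 -> 'rV[R[i]]_m2) :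
  is_lie br1 -> nilpotent br1 -> nonabelian br1 -> adapted br1 n1 ->
  is_lie br2 -> nilpotent br2 -> nonabelian br2 -> adapted br2 n2 ->
  S_algebra br1 n1 -> S_algebra br2 n2 ->
  (forall f : 'M[R[i]]_m1, is_der br1 f -> forall u : 'rV[R[i]]_m1, (u *m f <= C1 br1)%MS) ->
  (forall f : 'M[R[i]]_m2, is_der br2 f -> forall u : 'rV[R[i]]_m2, (u *m f <= C1 br2)%MS) ->
  char_nilpotent (gen_prod br1 br2 n1 n2) /\
  (forall D : 'M[R[i]]_(m1 + m2 + n1 * n2), is_der (gen_prod br1 br2 n1 n2) D ->
     forall u : 'rV[R[i]]_(m1 + m2 + n1 * n2), (u *m D <= C1 (gen_prod br1 br2 n1 n2))%MS).
Proof.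
move=> Hl1 Hn1 Hna1 Ha1 Hl2 Hn2 Hna2 Ha2 SA1 SA2 Hd1 Hd2.
exact: (main_gen Hl1 Hn1 Hna1 Ha1 Hl2 Hn2 Hna2 Ha2 SA1 SA2 Hd1 Hd2).
Qed.
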